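(* Let $0\le\gamma_1<\dots<\gamma_p\le1$, $\boldsymbol\alpha=(\alpha_1,\dots,\alpha_p)\in(0,1)^p$ with $\sum_i\alpha_i=1$, and for each $i$ let $(\gamma_{i,n})_n$ be $[0,1]$-valued with $|\gamma_{i,n}-\gamma_i|=O(1/n)$. Let $\phi_{n,\boldsymbol\alpha,\boldsymbol\gamma_n}(u)=\sum_{i=1}^p\alpha_i\phi_{n,\gamma_{i,n}}(u)$. Then for every $\epsilon>0$ there exists $N\in\mathbb{N}$ such that for all $n\ge N$, $\phi_{n,\boldsymbol\alpha,\boldsymbol\gamma_n}'$ is convex on each of the nonempty intervals $[0,\gamma_1-\epsilon]$, $[\gamma_i+\epsilon,\gamma_{i+1}-\epsilon]$ ($1\le i\le p-1$), and $[\gamma_p+\epsilon,1]$.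
   Context: $[x]$ is the integer part. $\phi_{n,\alpha}(t)=\sum_{j=1+[(n-1)\alpha]}^n\binom{n}{j}t^j(1-t)^{n-j}$, $t\in[0,1]$. *)

(* Defs.v *)
From HB Require Import structures.
From mathcomp Require Import all_boot all_order all_algebra.
From mathcomp Require Import all_classical all_reals all_analysis.
Set Implicit Arguments. Unset Strict Implicit. Unset Printing Implicit Defensive.
Import Order.TTheory GRing.Theory Num.Theory.
Local Open Scope ring_scope.

(* phi_{n,g}(t) = sum_{j = 1 + [(n-1) g]}^{n} C(n,j) t^j (1-t)^(n-j).
   The condition  floor((n-1) g) < j  is exactly  j >= 1 + [(n-1) g]. *)
Definition phi (R : realType) (n : nat) (g : R) (t : R) : R :=
  \sum_(0 <= j < n.+1 | Num.floor ((n%:R - 1) * g) < j%:Z)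
     ('C(n, j))%:R * t ^+ j * (1 - t) ^+ (n - j).

Definition phi_mix (R : realType) (p n : nat) (alpha : 'I_p -> R)
    (gam : 'I_p -> nat -> R) (u : R) : R :=
  \sum_(i < p) alpha i * phi n (gam i n) u.

Definition convex_on (R : realType) (a b : R) (f : R -> R) : Prop :=
  forall x y t : R, a <= x <= b -> a <= y <= b -> 0 <= t <= 1 ->
    f (t * x + (1 - t) * y) <= t * f x + (1 - t) * f y.

(* Main.v *)
Require Import Defs.
From HB Require Import structures.
From mathcomp Require Import all_boot all_order all_algebra.
From mathcomp Require Import all_classical all_reals all_analysis.
From mathcomp Require Import ring lra.
Import Order.TTheory GRing.Theory Num.Theory.
Local Open Scope ring_scope.

Section P2.
Variable R : realType.
Definition bp (m j : nat) : {poly R} := ('C(m, j))%:R *: ('X^j * (1 - 'X) ^+ (m - j)).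
Lemma horner_bp m j t : (bp m j).[t] = ('C(m, j))%:R * t ^+ j * (1 - t) ^+ (m - j).
Proof. by rewrite /bp !hornerE. Qed.
Definition kf (m : nat) (g : R) : nat := `|Num.floor (m%:R * g)|%N.

Lemma kf_le m g : 0 <= g <= 1 -> (kf m g <= m)%N.
Proof.
move=> /andP[g0 g1]; rewrite /kf -(ler_nat R).
have f0 : 0 <= Num.floor (m%:R * g) by rewrite floor_ge0 mulr_ge0.
rewrite -[(`|_|%N)%:R]/((Posz `|_|%N)%:~R) gez0_abs //.
apply: le_trans (floor_le _) _.
by rewrite ler_piMr.
Qed.

Lemma phi_poly m g : 0 <= g <= 1 ->
  phi m.+1 g = horner (\sum_((kf m g).+1 <= j < m.+2) bp m.+1 j).
Proof.
move=> hg; apply/funext => t.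
have hk := kf_le m g hg.
have f0 : 0 <= Num.floor (m%:R * g) by case/andP: hg => g0 _; rewrite floor_ge0 mulr_ge0.
rewrite /phi horner_sum mulrSr addrK -(gez0_abs f0) -/(kf m g).
rewrite big_mkcond (@big_cat_nat _ _ _ (kf m g).+1) //=; last by rewrite ltnS ltnW.
rewrite big_nat_cond big1 ?add0r; last first.
  by move=> i /andP[/andP[_ hi] _]; rewrite ltz_nat ltnNge -ltnS hi.
apply: eq_big_nat => i /andP[hi _]; rewrite ltz_nat hi horner_bp //.
Qed.
Lemma deriv_bpS m j : (bp m.+1 j.+1)^`() = (m.+1)%:R *: (bp m j - bp m j.+1).
Proof.
rewrite /bp derivZ derivM derivXn deriv_exp derivB derivC derivX subSS subnS.
have h1 := mul_bin_diag m.+1 j. have h2 := mul_bin_down m.+1 j.+1.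
rewrite /= subSS in h1 h2.
rewrite sub0r mulN1r mulNrn mulrN mulrnAl mulrnAr.
rewrite scalerDr scalerN scalerBr !scalerA -!scalerMnr !scalerMnl.
by rewrite -[_ *+ j.+1]mulr_natr -[_ *+ (m - j)]mulr_natr -!natrM h1 h2 [(_ * j.+1)%N]mulnC [('C(m.+1, j.+1) * _)%N]mulnC.
Qed.
End P2.

Section P3.
Variable R : realType.
Lemma dsum m k : (k <= m)%N ->
  (\sum_(k.+1 <= j < m.+2) bp R m.+1 j)^`() = m.+1%:R *: bp R m k.
Proof.
move=> hk.
rewrite (big_morph _ (@derivD _) (@deriv0 _)) big_add1 /=.
under eq_bigr => i _ do rewrite deriv_bpS.
rewrite -scaler_sumr; congr (_ *: _).
have T := @telescope_sumr _ k m.+1 (fun i => - bp R m i) (leqW hk).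
have h0 : bp R m m.+1 = 0 by rewrite /bp bin_small // scale0r.
rewrite h0 oppr0 sub0r opprK in T.
rewrite -[RHS]T; apply: eq_bigr => i _.
by rewrite opprK addrC.
Qed.

Lemma dphi m g : 0 <= g <= 1 ->
  derive1 (phi m.+1 g) = horner (m.+1%:R *: bp R m (kf R m g)).
Proof.
move=> hg; rewrite phi_poly // -derivE dsum //; exact: kf_le.
Qed.
End P3.

Section P4.
Variable R : realType.
Lemma D1h (F : {poly R}) : 'D_1 (horner F) = horner F^`().
Proof. by apply/funext=> z; rewrite -derive1E -derivE. Qed.

Lemma poly_convex (F : {poly R}) a b :
  (forall z, a < z < b -> 0 <= (F^`()^`()).[z]) -> convex_on a b (horner F).
Proof.
move=> h.
have key : forall u v (c : {i01 R}), a <= u -> v <= b -> u <= v ->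
    (horner F : R -> R^o) (conv c (u : R^o) (v : R^o)) <= conv c (F.[u] : R^o) (F.[v] : R^o).
  move=> u v c au vb uv; apply: second_derivative_convex => //.
  - move=> z /andP[uz zv].
    rewrite -derive1E.
    have -> : 'D_1 (horner F) = horner F^`() by apply/funext=> w; rewrite -derive1E -derivE.
    rewrite -derivE; apply: h.
    by rewrite (le_lt_trans au uz) (lt_le_trans zv vb).
  - have Hc := @continuous_horner _ F v.
    exact: cvg_at_left_filter Hc.
  - have Hc := @continuous_horner _ F u.
    exact: cvg_at_right_filter Hc.
  - move=> z _.
    have -> : 'D_1 (horner F) = horner F^`() by apply/funext=> w; rewrite -derive1E -derivE.
    exact: derivable_horner.
move=> x y s /andP[ax xb] /andP[ay yb] /andP[s0 s1].
have [xy|yx] := leP x y.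
  by have := key x y (Itv01 s0 s1) ax yb xy; rewrite !convRE /=.
have s0' : 0 <= 1 - s by rewrite subr_ge0.
have s1' : 1 - s <= 1 by rewrite lerBlDr lerDl.
have := key y x (Itv01 s0' s1') ay xb (ltW yx); rewrite !convRE /= /unstable.onem.
have -> : 1 - (1 - s) = s by ring.
by rewrite addrC [X in _ <= X]addrC.
Qed.
End P4.

Section P4b.
Variable R : realType.
Lemma L1 k : 'X * ('X^k)^`() = k%:R *: ('X^k : {poly R}).
Proof.
case: k => [|k]; first by rewrite derivXn mulr0n mulr0 scale0r.
by rewrite derivXn mulrnAr -exprS scaler_nat.
Qed.

Lemma L2 l : (1 - 'X) * ((1 - 'X)^+l)^`() = - (l%:R *: ((1 - 'X)^+l : {poly R})).
Proof.
case: l => [|l]; first by rewrite deriv_exp mulr0n mulr0 scale0r oppr0.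
rewrite deriv_exp derivB derivC derivX sub0r mulN1r mulNrn mulrN mulrnAr -exprS.
by rewrite scaler_nat.
Qed.

Lemma idI k l : let P : {poly R} := 'X^k * (1 - 'X)^+l in
  'X * (1 - 'X) * P^`() = ((k%:R *: (1 - 'X)) - l%:R *: 'X) * P.
Proof.
move=> P; rewrite /P derivM.
have e1 := L1 k; have e2 := L2 l.
set A := ('X^k)^`() in e1 *; set B := ((1 - 'X)^+l)^`() in e2 *.
transitivity ((1 - 'X) * (1 - 'X)^+l * ('X * A) + 'X * 'X^k * ((1 - 'X) * B)); first by ring.
rewrite e1 e2 -!mul_polyC; ring.
Qed.
End P4b.

Section P5.
Variable R : realType.
Lemma hpp_ge0 k l t : 0 < t < 1 ->
  (k + l)%:R <= (k%:R - (k + l)%:R * t) ^+ 2 ->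
  0 <= ((('X^k * (1 - 'X)^+l : {poly R})^`())^`()).[t].
Proof.
move=> /andP[t0 t1] hq.
have I := idI R k l; simpl in I.
set P := ('X^k * (1 - 'X)^+l : {poly R}) in I *.
have hE : P.[t] = t ^+ k * (1 - t) ^+ l by rewrite /P !hornerE.
clearbody P.
have II := congr1 (@deriv R) I.
have I' := congr1 (horner^~ t) I.
have II' := congr1 (horner^~ t) II.
rewrite !(derivM, derivB, derivZ, derivX, derivC) in II'.
rewrite !hornerE /= in I' II'.
set E := P.[t] in I' II' hE *; set E1 := P^`().[t] in I' II' *; set E2 := (P^`())^`().[t] in II' *.
rewrite natrD in hq.
set K := k%:R in I' II' hq *; set L := l%:R in I' II' hq *.
have K0 : 0 <= K by rewrite /K ler0n.
have L0 : 0 <= L by rewrite /L ler0n.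
have H1 := congr1 (fun z => t * (1 - t) * z) II'; simpl in H1.
have H2 := congr1 (fun z => ((K * (1 - t) - L * t) - (1 - 2 * t)) * z) I'; simpl in H2.
have key : t ^+ 2 * (1 - t) ^+ 2 * E2 =
    E * ((K - (K + L) * t) ^+ 2 - K * (1 - t) ^+ 2 - L * t ^+ 2).
  rewrite !expr2; (lra || fail 2 "KEY").
have E0 : 0 <= E by rewrite hE; apply: mulr_ge0; apply: exprn_ge0; lra.
have pos : 0 < t ^+ 2 * (1 - t) ^+ 2 by apply: mulr_gt0; apply: exprn_gt0; lra.
rewrite -(pmulr_rge0 _ pos) key; apply: mulr_ge0 => //.
have a1 : K * (1 - t) ^+ 2 <= K.
  rewrite expr2 -[X in _ <= X]mulr1; apply: ler_wpM2l => //; nra.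
have a2 : L * t ^+ 2 <= L.
  rewrite expr2 -[X in _ <= X]mulr1; apply: ler_wpM2l => //; nra.
(lra || fail 2 "LAST").
Qed.
End P5.

Section P6.
Variable R : realType.

Lemma natabs_floor (x : R) : 0 <= x ->
  (`|Num.floor x|%N)%:R = (Num.floor x)%:~R :> R.
Proof.
move=> x0; have f0 : 0 <= Num.floor x by rewrite floor_ge0.
by rewrite -[(`|_|%N)%:R]/((Posz `|_|%N)%:~R) gez0_abs.
Qed.

Lemma asym (gi : nat -> R) (g eps : R) : 0 < eps -> (forall n, 0 <= gi n <= 1) ->
  (exists (C : R) (N0 : nat), forall n : nat, (N0 <= n)%N -> `|gi n - g| <= C / n%:R) ->
  exists N : nat, forall m : nat, (N <= m)%N -> forall t : R, eps <= `|t - g| ->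
    m%:R <= ((kf R m (gi m.+1))%:R - m%:R * t) ^+ 2.
Proof.
move=> e0 hgi [C [N0 HC]].
set A := 2 * (`|C| + 1) / eps.
set B := 4 / (eps * eps).
have A0 : 0 <= A by rewrite /A divr_ge0 // ?ltW // mulr_ge0 // addr_ge0.
have B0 : 0 <= B by rewrite /B divr_ge0 // mulr_ge0 // ltW.
have hA : A * eps = 2 * (`|C| + 1) by rewrite /A divfK // gt_eqF.
have hB : B * (eps * eps) = 4 by rewrite /B divfK // gt_eqF // mulr_gt0.
set X := A + B.
have X0 : 0 <= X by rewrite addr_ge0.
exists ((`|Num.floor X|%N).+1 + N0)%N => m hm t ht.
have hmX : X < m%:R.
  have h1 : X < (`|Num.floor X|%N.+1)%:R.
    rewrite -natr1 natabs_floor //.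
    by have /andP[_] := floor_itv X; rewrite intrD.
  apply: lt_le_trans h1 _; rewrite ler_nat.
  exact: leq_trans (leq_addr _ _) hm.
rewrite /X in hmX.
have hm1 : (N0 <= m.+1)%N.
  by apply: leq_trans (leq_addl _ _) (leq_trans hm (leqnSn m)).
have HC' := HC _ hm1.
set d := gi m.+1 - g in HC'.
have m0 : 0 <= m%:R :> R by rewrite ler0n.
have hd : `|d| * m.+1%:R <= `|C|.
  rewrite -ler_pdivlMr ?ltr0n //; apply: le_trans HC' _.
  by rewrite ler_pM2r ?invr_gt0 ?ltr0n // ler_norm.
rewrite -natr1 in hd.
have d1 := ler_norm d; have d2 := ler_norm (- d); rewrite normrN in d2.
have dn : 0 <= `|d| by [].
have md1 : m%:R * d <= `|C| by (nra || fail 2 "T2").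
have md2 : - (m%:R * d) <= `|C| by (nra || fail 2 "T3").
set k := kf R m (gi m.+1).
have gi0 : 0 <= m%:R * gi m.+1 by case/andP: (hgi m.+1) => g0 _; rewrite mulr_ge0.
have /andP[hk1 hk2] := floor_itv (m%:R * gi m.+1).
rewrite intrD -natabs_floor // -/(kf R m (gi m.+1)) -/k in hk1 hk2.
have meps : 2 * (`|C| + 1) <= m%:R * eps.
  rewrite -hA; apply: ler_wpM2r; [exact: ltW | (lra || fail 2 "T4")].
have meps2 : 4 <= m%:R * (eps * eps).
  rewrite -hB; apply: ler_wpM2r; [by rewrite mulr_ge0 // ltW | (lra || fail 2 "T5")].
set w := m%:R * eps / 2.
have w0 : 0 <= w by rewrite /w divr_ge0 // mulr_ge0 // ltW.
have ww : m%:R <= w * w.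
  have : w * w = m%:R * (m%:R * (eps * eps)) / 4 by rewrite /w; field.
  move=> ->; rewrite ler_pdivlMr //; (nra || fail 2 "T6").
move: ht; rewrite ler_normr => /orP[ht'|ht'].
- have hmt : m%:R * eps <= m%:R * (t - g) by apply: ler_wpM2l.
  have hy : w <= - (k%:R - m%:R * t).
    rewrite /w /d in hmt md1 md2 *; (lra || fail 2 "T7").
  rewrite expr2; (nra || fail 2 "T8").
- have hmt : m%:R * eps <= m%:R * (- (t - g)) by apply: ler_wpM2l.
  have hy : w <= k%:R - m%:R * t.
    rewrite /w /d in hmt md1 md2 *; (lra || fail 2 "T9").
  rewrite expr2; (nra || fail 2 "T10").
Qed.
End P6.

Section P7.
Variable R : realType.

Lemma dmix p m (alpha : 'I_p -> R) (gam : 'I_p -> nat -> R) :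
  (forall i, 0 <= gam i m.+1 <= 1) ->
  derive1 (phi_mix m.+1 alpha gam) =
  horner (\sum_(i < p) alpha i *: (m.+1%:R *: bp R m (kf R m (gam i m.+1)))).
Proof.
move=> hg.
have -> : phi_mix m.+1 alpha gam = horner (\sum_(i < p) alpha i *:
     \sum_((kf R m (gam i m.+1)).+1 <= j < m.+2) bp R m.+1 j).
  apply/funext => u; rewrite /phi_mix horner_sum; apply: eq_bigr => i _.
  by rewrite hornerZ phi_poly.
rewrite -derivE (big_morph _ (@derivD _) (@deriv0 _)); congr horner.
apply: eq_bigr => i _; rewrite derivZ dsum //; exact: kf_le.
Qed.

Lemma mix_convex p m (alpha : 'I_p -> R) (ks : 'I_p -> nat) a b :
  (forall i, 0 <= alpha i) -> (forall i, ks i <= m)%N ->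
  (forall z, a < z < b -> 0 < z < 1 /\
     forall i, m%:R <= ((ks i)%:R - m%:R * z) ^+ 2) ->
  convex_on a b (horner (\sum_(i < p) alpha i *: (m.+1%:R *: bp R m (ks i)))).
Proof.
move=> ha hk hz; apply: poly_convex => z /hz [z01 hq].
rewrite !(big_morph _ (@derivD _) (@deriv0 _)) horner_sum.
apply: sumr_ge0 => i _.
rewrite (derivZ (alpha i)) (derivZ (alpha i)) hornerZ.
rewrite (derivZ m.+1%:R) (derivZ m.+1%:R) hornerZ /bp.
rewrite (derivZ 'C(m, ks i)%:R) (derivZ 'C(m, ks i)%:R) hornerZ.
apply: mulr_ge0 => //; apply: mulr_ge0 => //; apply: mulr_ge0 => //.
apply: hpp_ge0 => //; rewrite subnKC //; exact: hq.
Qed.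
End P7.

Theorem lemma5p3 (R : realType) (p : nat) (gamma : 'I_p -> R)
    (alpha : 'I_p -> R) (gam : 'I_p -> nat -> R) :
  (forall i, 0 <= gamma i <= 1) ->
  (forall i j : 'I_p, (i < j)%N -> gamma i < gamma j) ->
  (forall i, 0 < alpha i < 1) ->
  \sum_(i < p) alpha i = 1 ->
  (forall i n, 0 <= gam i n <= 1) ->
  (forall i, exists (C : R) (N0 : nat), forall n : nat, (N0 <= n)%N ->
       `|gam i n - gamma i| <= C / n%:R) ->
  forall eps : R, 0 < eps ->
  exists N : nat, forall n : nat, (N <= n)%N ->
    let f := derive1 (phi_mix n alpha gam) in
    (forall i0 : 'I_p, (i0 : nat) = 0%N -> convex_on (0 : R) (gamma i0 - eps) f) /\
    (forall i j : 'I_p, j = i.+1 :> nat ->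
       convex_on (gamma i + eps) (gamma j - eps) f) /\
    (forall ip : 'I_p, (ip : nat) = p.-1 -> convex_on (gamma ip + eps) 1 f).
Proof.
move=> hg hmono ha _ hgam hC eps e0.
have mle : forall i j : 'I_p, (i <= j)%N -> gamma i <= gamma j.
  move=> i j; rewrite leq_eqVlt => /orP[/eqP e|lt].
    by have -> : i = j by apply: val_inj.
  exact/ltW/hmono.
have [Nf HN] := fin_all_exists (fun i => @asym R (gam i) (gamma i) eps e0 (hgam i) (hC i)).
exists (\max_(i < p) Nf i).+1 => -[//|m] hm f.
have Nm : forall i, (Nf i <= m)%N by move=> i; exact: leq_trans (leq_bigmax i) hm.
have a0 : forall i, 0 <= alpha i by move=> i; case/andP: (ha i) => /ltW.
have fE : f = horner (\sum_(i < p) alpha i *: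
      (m.+1%:R *: bp R m (kf R m (gam i m.+1)))) by rewrite /f dmix.
rewrite fE.
have kle : forall i, (kf R m (gam i m.+1) <= m)%N by move=> i; exact: kf_le.
have gen : forall a b, (forall z, a < z < b -> 0 < z < 1 /\ forall i, eps <= `|z - gamma i|) ->
    convex_on a b (horner (\sum_(i < p) alpha i *:
      (m.+1%:R *: bp R m (kf R m (gam i m.+1))))).
  move=> a b H; apply: mix_convex => // z /H [z01 hz]; split => // i.
  exact: HN (Nm i) _ (hz i).
split; [|split].
- move=> i0 h0; apply: gen => z /andP[z0 z1].
  have g1 := hg i0; split; first by apply/andP; split => //; lra.
  move=> i; rewrite ler_normr; apply/orP; right.
  have : gamma i0 <= gamma i by apply: mle; rewrite h0.
  lra.
- move=> i j hij; apply: gen => z /andP[z0 z1].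
  have g1 := hg i; have g2 := hg j.
  split; first by apply/andP; split; lra.
  move=> l; rewrite ler_normr; apply/orP.
  case: (leqP l i) => hl.
    by left; have := mle _ _ hl; lra.
  right; have : gamma j <= gamma l by apply: mle; rewrite hij.
  lra.
- move=> ip hp; apply: gen => z /andP[z0 z1].
  have g1 := hg ip; split; first by apply/andP; split; lra.
  move=> l; rewrite ler_normr; apply/orP; left.
  have : gamma l <= gamma ip.
    by apply: mle; rewrite hp -ltnS (ltn_predK (ltn_ord l)).
  lra.
Qed.
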